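(* Let $G$ be an additive group and let $(X,\rho)$ be the $\mathbb R$-tree described below. Then every point of $X$ is a point of valency $|G|+1$, i.e. for every $x\in X$ the set $X\setminus\{x\}$ has exactly $|G|+1$ connected components.
   Context: A function on an interval $(\alpha,\beta)$ is piecewise constant from the left if for every $x$ there is $\varepsilon>0$ with $f$ constant on $[x-\varepsilon,x]$. $X$ is the set of pairs $(f,a_f)$, $a_f>0$ real, $f:(a_f,+\infty)\to G$ piecewise constant from the left with $f|_{(b_f,+\infty)}\equiv0$ for some $b_f\ge a_f$. Order: $(f,a_f)\preceq(g,a_g)$ iff $a_f\le a_g$ and $f|_{(a_g,+\infty)}=g$; any two elements $p,q$ have a supremum $p\vee q$. Metric: $\rho((f,a_f),(g,a_g))=|a_f-a_g|$ if the pairs are comparable, and $\rho(p,q)=\rho(p,p\vee q)+\rho(p\vee q,q)$ otherwise. $|G|$ is the cardinality of $G$. *)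

(* Defs.v *)
From HB Require Import structures.
From mathcomp Require Import all_boot all_order all_algebra.
From mathcomp Require Import boolp reals.
From Stdlib Require Import ClassicalEpsilon.
Set Implicit Arguments. Unset Strict Implicit. Unset Printing Implicit Defensive.
Import Order.TTheory GRing.Theory Num.Theory.
Local Open Scope ring_scope.

Section Tree.
Variables (R : realType) (G : zmodType).

(* A pair (f, a_f).  The function f : (a_f,+oo) -> G is represented by a
   total function R -> G normalised to be 0 on (-oo, a_f]. *)
Record pt := Pt { pa : R ; pf : R -> G }.

Definition pw_const_left (a : R) (f : R -> G) : Prop :=
  forall x, a < x -> exists eps : R, 0 < eps /\ a < x - eps /\
    forall t, x - eps <= t <= x -> f t = f x.

Definition wf (p : pt) : Prop :=
  0 < pa p /\
  (forall t, t <= pa p -> pf p t = 0) /\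
  pw_const_left (pa p) (pf p) /\
  (exists b, pa p <= b /\ forall t, b < t -> pf p t = 0).

Definition X := {p : pt | wf p}.

Definition xa (p : X) : R := pa (proj1_sig p).
Definition xf (p : X) : R -> G := pf (proj1_sig p).

Definition preceq (p q : X) : Prop :=
  xa p <= xa q /\ forall t, xa q < t -> xf p t = xf q t.

Definition comparable (p q : X) : Prop := preceq p q \/ preceq q p.

Definition is_sup (p q s : X) : Prop :=
  preceq p s /\ preceq q s /\ forall u, preceq p u -> preceq q u -> preceq s u.

(* the supremum p \/ q (it exists for any two elements) *)
Definition join (p q : X) : X := epsilon (inhabits p) (is_sup p q).

Definition rho_cmp (p q : X) : R := `|xa p - xa q|.

Definition rho (p q : X) : R :=
  if `[< comparable p q >] then rho_cmp p q
  else rho_cmp p (join p q) + rho_cmp (join p q) q.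

Definition rho_open (U : X -> Prop) : Prop :=
  forall p, U p -> exists e : R, 0 < e /\ forall q, rho p q < e -> U q.

Definition rho_connected (A : X -> Prop) : Prop :=
  forall U V : X -> Prop, rho_open U -> rho_open V ->
    (forall p, A p -> U p \/ V p) ->
    (exists p, A p /\ U p) -> (exists p, A p /\ V p) ->
    exists p, A p /\ U p /\ V p.

Definition same_component_minus (x y z : X) : Prop :=
  exists A : X -> Prop, rho_connected A /\ (forall w, A w -> w <> x) /\ A y /\ A z.

End Tree.

(* Main.v *)
Require Import Defs.
From HB Require Import structures.
From mathcomp Require Import all_boot all_order all_algebra.
From mathcomp Require Import boolp classical_sets reals.
From mathcomp Require Import lra.
From Stdlib Require Import ClassicalEpsilon.
Set Implicit Arguments. Unset Strict Implicit. Unset Printing Implicit Defensive.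
Import Order.TTheory GRing.Theory Num.Theory.
Local Open Scope ring_scope.

Section Proof.
Variables (R : realType) (G : zmodType).
Local Notation XX := (X R G).

Lemma absge (x : R) : x <= `|x| /\ - x <= `|x|.
Proof. split; first exact: ler_norm. by rewrite -normrN ler_norm. Qed.

Lemma min_pos (e d : R) : 0 < e -> 0 < d -> exists e', 0 < e' /\ e' <= e /\ e' <= d.
Proof.
move=> he hd; case: (lerP e d) => h; first by exists e; split.
by exists d; split => //; split => //; apply: ltW.
Qed.

Lemma X_ext (p q : XX) : xa p = xa q -> (forall t, xf p t = xf q t) -> p = q.
Proof.
case: p => [[a f] hp]; case: q => [[b g] hq]; rewrite /xa /xf /= => eab efg.
subst b. have efg' : f = g by apply: funext. subst g.
congr exist. exact: Prop_irrelevance.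
Qed.

Lemma wfX (p : XX) : wf (proj1_sig p).
Proof. exact: proj2_sig. Qed.

Lemma xa_pos (p : XX) : 0 < xa p.
Proof. by case: (wfX p). Qed.

Lemma xf_low (p : XX) t : t <= xa p -> xf p t = 0.
Proof. by case: (wfX p) => _ [h _]; apply: h. Qed.

Lemma xf_pw (p : XX) : pw_const_left (xa p) (xf p).
Proof. by case: (wfX p) => _ [_ [h _]]. Qed.

Lemma xf_ev (p : XX) : exists b, xa p <= b /\ forall t, b < t -> xf p t = 0.
Proof. by case: (wfX p) => _ [_ [_ h]]. Qed.

Lemma preceq_refl (p : XX) : preceq p p.
Proof. by split. Qed.

Lemma preceq_antisym (p q : XX) : preceq p q -> preceq q p -> p = q.
Proof.
move=> [h1 h2] [h3 h4]; have ea : xa p = xa q by apply/eqP; rewrite eq_le h1 h3.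
apply: X_ext => // t; case: (lerP t (xa q)) => ht.
  by rewrite xf_low ?ea // xf_low.
exact: h2.
Qed.

Lemma preceq_lt (p x : XX) : preceq p x -> p <> x -> xa p < xa x.
Proof.
move=> [h1 h2] hne; rewrite lt_neqAle h1 andbT; apply/eqP => ea.
apply: hne; apply: preceq_antisym; first by split.
split; first by rewrite ea. by move=> t ht; rewrite h2 // -ea.
Qed.

Lemma rho_comp (p q : XX) : Defs.comparable p q -> rho p q = `|xa p - xa q|.
Proof. by move=> h; rewrite /rho asboolT. Qed.

Definition sega (p : XX) (t : R) : R := if xa p <= t then t else xa p.
Definition segf (p : XX) (t : R) : R -> G :=
  fun s => if sega p t < s then xf p s else 0.

Lemma sega_ge (p : XX) t : xa p <= sega p t /\ t <= sega p t.
Proof.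
rewrite /sega; case: ifP => h; split => //; try by rewrite lexx.
by rewrite ltW // ltNge h.
Qed.

Lemma sega_id (p : XX) t : xa p <= t -> sega p t = t.
Proof. by rewrite /sega => ->. Qed.

Lemma sega_mono (p : XX) s t : s <= t -> sega p s <= sega p t.
Proof.
rewrite /sega => hst; case: (lerP (xa p) s) => h1; case: (lerP (xa p) t) => h2; lra.
Qed.

Lemma wf_seg (p : XX) t : wf (Pt (sega p t) (segf p t)).
Proof.
have [ha ht] := sega_ge p t; set m := sega p t in ha ht *.
have hpos := xa_pos p.
rewrite /wf /=; split; first by lra.
split.
  by move=> s /= hs; rewrite /segf -/m ltNge hs.
split.
  move=> s /= hs.
  have hs' : xa p < s by lra.
  have [eps [he [he2 hc]]] := xf_pw hs'.
  have hd : 0 < (s - m) / 2 by lra.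
  have [e' [he' [h1 h2]]] := min_pos he hd.
  exists e'; split => //; split; first by lra.
  move=> u /andP [hu1 hu2]; rewrite /segf -/m.
  have -> : m < u by lra.
  have -> : m < s by lra.
  by apply: hc; apply/andP; split; lra.
have [b [hb1 hb2]] := xf_ev p.
exists (b + m); split => /=; first by lra.
move=> s hs; rewrite /segf -/m; case: ifP => // _; apply: hb2; lra.
Qed.

Definition seg (p : XX) (t : R) : XX := exist _ (Pt (sega p t) (segf p t)) (wf_seg p t).

Lemma seg_xa (p : XX) t : xa (seg p t) = sega p t.
Proof. by []. Qed.

Lemma seg_xf (p : XX) t s : xf (seg p t) s = segf p t s.
Proof. by []. Qed.

Lemma preceq_seg (p : XX) t : preceq p (seg p t).
Proof.
have [ha _] := sega_ge p t.
split => // s hs; rewrite seg_xf /segf.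
by move: hs; rewrite seg_xa => ->.
Qed.

Lemma seg_self (p : XX) : seg p (xa p) = p.
Proof.
apply: X_ext; first by rewrite seg_xa sega_id.
move=> s; rewrite seg_xf /segf sega_id //; case: ifP => // h.
by rewrite xf_low // leNgt h.
Qed.

Lemma seg_le (p : XX) s t : s <= t -> preceq (seg p s) (seg p t).
Proof.
move=> hst; have hm := sega_mono p hst.
split; first by rewrite !seg_xa.
move=> u; rewrite !seg_xa !seg_xf /segf => hu.
by rewrite hu (le_lt_trans hm hu).
Qed.

Lemma rho_seg (p : XX) s t : xa p <= s -> xa p <= t ->
  rho (seg p s) (seg p t) <= `|s - t|.
Proof.
move=> hs ht; rewrite rho_comp; last first.
  by case: (lerP s t) => h; [left|right]; apply: seg_le => //; apply: ltW.
by rewrite !seg_xa !sega_id.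
Qed.

Lemma conn_half (g : R -> XX) lo hi (U V : XX -> Prop) tu tv :
  (forall s t, lo <= s <= hi -> lo <= t <= hi -> rho (g s) (g t) <= `|s - t|) ->
  rho_open U -> rho_open V ->
  (forall t, lo <= t <= hi -> U (g t) \/ V (g t)) ->
  lo <= tu <= hi -> lo <= tv <= hi -> tu <= tv -> U (g tu) -> V (g tv) ->
  exists t, lo <= t <= hi /\ U (g t) /\ V (g t).
Proof.
move=> hrho hU hV hcov /andP[hu1 hu2] /andP[hv1 hv2] huv Uu Vv.
pose S := fun t => tu <= t <= tv /\ U (g t).
have hS : has_sup S.
  split; first by exists tu; split => //; rewrite lexx huv.
  by exists tv => t [/andP[_ h] _].
have ub := sup_upper_bound hS.
have hT1 : tu <= sup S by apply: ub; split => //; rewrite lexx huv.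
have hT2 : sup S <= tv.
  by apply: ge_sup; [case: hS | move=> t [/andP[_ h] _]].
set T := sup S in hT1 hT2 ub.
have hTi : lo <= T <= hi by apply/andP; split; lra.
case: (hcov T hTi) => [UT|VT].
  have [hTv|hTv] := eqVneq T tv.
    by exists tv; split; [apply/andP|split => //; rewrite -hTv].
  have hlt : T < tv by rewrite lt_neqAle hTv hT2.
  have [e [he hUe]] := hU _ UT.
  case: (lerP (T + e / 2) tv) => hc.
    have : S (T + e / 2).
      split; first by apply/andP; split; lra.
      apply: hUe; apply: le_lt_trans (hrho _ _ hTi _) _.
        by apply/andP; split; lra.
      rewrite ler0_norm; lra.
    move/ub; lra.
  exists tv; split; first by apply/andP.
  split => //; apply: hUe; apply: le_lt_trans (hrho _ _ hTi _) _.
    by apply/andP.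
  rewrite ler0_norm; lra.
have [e [he hVe]] := hV _ VT.
have [s [/andP[hs1 hs2] Us] hs] := sup_adherent he hS.
rewrite -/T in hs.
have hsT : s <= T by apply: ub; split => //; apply/andP.
have hsi : lo <= s <= hi by apply/andP; split; lra.
exists s; split => //; split => //; apply: hVe.
apply: le_lt_trans (hrho _ _ hTi hsi) _; rewrite ger0_norm; lra.
Qed.

Lemma conn_path (g : R -> XX) lo hi :
  (forall s t, lo <= s <= hi -> lo <= t <= hi -> rho (g s) (g t) <= `|s - t|) ->
  rho_connected (fun p => exists t, lo <= t <= hi /\ p = g t).
Proof.
move=> hrho U V hU hV hcov [pu [[tu [htu ->]] Uu]] [pv [[tv [htv ->]] Vv]].
have hcov' : forall t, lo <= t <= hi -> U (g t) \/ V (g t).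
  by move=> t ht; apply: hcov; exists t.
case: (lerP tu tv) => h.
  have [t [ht [Ut Vt]]] := conn_half hrho hU hV hcov' htu htv h Uu Vv.
  by exists (g t); split => //; exists t.
have hcov'' : forall t, lo <= t <= hi -> V (g t) \/ U (g t).
  by move=> t ht; case: (hcov' t ht); [right|left].
have [t [ht [Vt Ut]]] := conn_half hrho hV hU hcov'' htv htu (ltW h) Vv Uu.
by exists (g t); split => //; exists t.
Qed.

Lemma conn_union (A B : XX -> Prop) :
  rho_connected A -> rho_connected B -> (exists w, A w /\ B w) ->
  rho_connected (fun p => A p \/ B p).
Proof.
move=> cA cB [w [Aw Bw]] U V hU hV hcov [pu [Hpu Uu]] [pv [Hpv Vv]].
have covA : forall p, A p -> U p \/ V p by move=> p hp; apply: hcov; left.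
have covB : forall p, B p -> U p \/ V p by move=> p hp; apply: hcov; right.
case: (hcov w (or_introl Aw)) => [Uw|Vw].
  case: Hpv => Hpv.
    have [p [Ap [Up Vp]]] := cA U V hU hV covA (ex_intro _ w (conj Aw Uw)) (ex_intro _ pv (conj Hpv Vv)).
    by exists p; split => //; left.
  have [p [Bp [Up Vp]]] := cB U V hU hV covB (ex_intro _ w (conj Bw Uw)) (ex_intro _ pv (conj Hpv Vv)).
  by exists p; split => //; right.
case: Hpu => Hpu.
  have [p [Ap [Up Vp]]] := cA U V hU hV covA (ex_intro _ pu (conj Hpu Uu)) (ex_intro _ w (conj Aw Vw)).
  by exists p; split => //; left.
have [p [Bp [Up Vp]]] := cB U V hU hV covB (ex_intro _ pu (conj Hpu Uu)) (ex_intro _ w (conj Bw Vw)).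
by exists p; split => //; right.
Qed.


Lemma sup_ex (p q : XX) : exists s, is_sup p q s.
Proof.
pose m := if xa p <= xa q then xa q else xa p.
have [hm1 hm2] : xa p <= m /\ xa q <= m.
  by rewrite /m; case: (lerP (xa p) (xa q)) => h; split => //; try rewrite lexx //; apply: ltW.
have hu_m : forall u : R, xa p <= u -> xa q <= u -> m <= u.
  by move=> u h1 h2; rewrite /m; case: ifP.
pose S := fun t => m <= t /\ forall s, t < s -> xf p s = xf q s.
have [bp [hbp1 hbp2]] := xf_ev p.
have [bq [hbq1 hbq2]] := xf_ev q.
have hpp := xa_pos p; have hqp := xa_pos q.
have hne : exists t, S t.
  exists (bp + bq + m); split; first by lra.
  by move=> s hs; rewrite hbp2 ?hbq2 //; lra.
have hlb : has_lbound S by exists m => t [].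
have hc : m <= inf S by apply: lb_le_inf => // t [].
set c := inf S in hc.
have agree : forall s, c < s -> xf p s = xf q s.
  move=> s hs; have [y [_ hy] hys] := inf_lt hne hs; exact: hy.
have hsega : sega p c = c by apply: sega_id; lra.
exists (seg p c); split; first exact: preceq_seg.
split.
  split; first by rewrite seg_xa hsega; lra.
  move=> s; rewrite seg_xa hsega => hs.
  by rewrite seg_xf /segf hsega hs agree.
move=> u [hu1 hu2] [hu3 hu4].
have hSu : S (xa u).
  split; first exact: hu_m.
  by move=> s hs; rewrite hu2 // hu4.
have hcu : c <= xa u by apply: ge_inf.
split; first by rewrite seg_xa hsega.
move=> s hs; rewrite seg_xf /segf hsega.
have -> : c < s by lra.
exact: hu2.
Qed.

Lemma join_sup (p q : XX) : is_sup p q (join p q).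
Proof. rewrite /join; apply: epsilon_spec; exact: sup_ex. Qed.

Lemma ub_rho (p q : XX) : exists w, preceq p w /\ preceq q w /\
  xa w - xa p <= rho p q /\ xa w - xa q <= rho p q.
Proof.
have [hc|hc] := pselect (Defs.comparable p q).
  rewrite rho_comp //; have [a1 a2] := absge (xa p - xa q).
  case: hc => h.
    exists q; split => //; split; first exact: preceq_refl.
    case: h => h _; split; lra.
  exists p; split; first exact: preceq_refl.
  split => //; case: h => h _; split; lra.
have [h1 [h2 _]] := join_sup p q.
exists (join p q); split => //; split => //.
rewrite /rho asboolF //.
have [a1 a2] := absge (xa p - xa (join p q)).
have [a3 a4] := absge (xa (join p q) - xa q).
case: h1 => h1 _; case: h2 => h2 _.
rewrite /rho_cmp; split; lra.
Qed.


Definition lblX (x y : XX) : option G :=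
  if `[< preceq y x >] then Some (xf y (xa x)) else None.

Lemma open_lbl (x : XX) o : rho_open (fun p => p <> x /\ lblX x p = o).
Proof.
move=> p [hpx <-]; rewrite /lblX.
have [hp|hp] := pselect (preceq p x).
  rewrite asboolT //.
  have hlt := preceq_lt hp hpx; clear hpx.
  exists (xa x - xa p); split; first by lra.
  move=> q hq; have [w [[hw1 hw2] [[hw3 hw4] [hw5 hw6]]]] := ub_rho p q.
  have hwx : xa w < xa x by lra.
  have hqx : preceq q x.
    split; first by lra.
    move=> t ht; rewrite hw4; last by lra.
    rewrite -hw2; last by lra.
    by case: hp => _ ->.
  split.
    by move=> e; subst q; move: hwx; rewrite ltNge hw3.
  rewrite asboolT //; congr Some.
  by rewrite hw4 // hw2.
rewrite asboolF //; clear hpx.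
have [hxp|hxp] := lerP (xa p) (xa x); last first.
  exists (xa p - xa x); split; first by lra.
  move=> q hq; have [w [[hw1 hw2] [[hw3 hw4] [hw5 hw6]]]] := ub_rho p q.
  have hqx : ~ preceq q x by case => h _; lra.
  split; first by move=> e; subst q; apply: hqx; exact: preceq_refl.
  by rewrite asboolF.
have [t0 ht0] : exists t0, ~ (xa x < t0 -> xf p t0 = xf x t0).
  apply: not_all_ex_not => hall; apply: hp; split => //.
have [ht0a ht0b] : xa x < t0 /\ xf p t0 <> xf x t0.
  split; first by apply: contra_notT ht0 => /negP h1 h2; move: (h1 h2).
  by move=> e; apply: ht0 => _.
exists (t0 - xa p); split; first by lra.
move=> q hq; have [w [[hw1 hw2] [[hw3 hw4] [hw5 hw6]]]] := ub_rho p q.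
have hqx : ~ preceq q x.
  case=> h1 h2; apply: ht0b; rewrite hw2; last by lra.
  rewrite -hw4; last by lra.
  exact: h2.
split; first by move=> e; subst q; apply: hqx; exact: preceq_refl.
by rewrite asboolF.
Qed.


Lemma same_of_meet (x y z : XX) H : xa y <= H -> xa z <= H -> seg y H = seg z H ->
  (forall t, xa y <= t <= H -> seg y t <> x) ->
  (forall t, xa z <= t <= H -> seg z t <> x) -> same_component_minus x y z.
Proof.
move=> hy hz hyz ay az.
exists (fun p => (exists t, xa y <= t <= H /\ p = seg y t) \/
                 (exists t, xa z <= t <= H /\ p = seg z t)).
split.
  apply: conn_union.
  - apply: conn_path => s t /andP[h1 _] /andP[h2 _]; exact: rho_seg.
  - apply: conn_path => s t /andP[h1 _] /andP[h2 _]; exact: rho_seg.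
  - exists (seg y H); split; first by exists H; rewrite hy lexx.
    by exists H; rewrite hz lexx hyz.
split.
  by move=> w [[t [ht ->]]|[t [ht ->]]]; [apply: ay|apply: az].
split.
  by left; exists (xa y); rewrite lexx hy seg_self.
by right; exists (xa z); rewrite lexx hz seg_self.
Qed.

Lemma same_of_lbl (x y z : XX) : y <> x -> z <> x -> lblX x y = lblX x z ->
  same_component_minus x y z.
Proof.
move=> hyx hzx; rewrite /lblX.
have [hy|hy] := pselect (preceq y x); have [hz|hz] := pselect (preceq z x).
- rewrite (asboolT hy) (asboolT hz) => -[e].
  have ly := preceq_lt hy hyx; have lz := preceq_lt hz hzx.
  clear hyx hzx; have {}e : True -> xf y (xa x) = xf z (xa x) by move=> _; exact e.
  have [e1 [he1 [he1' hc1]]] := xf_pw ly.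
  have [e2 [he2 [he2' hc2]]] := xf_pw lz.
  have [e' [he' [h1 h2]]] := min_pos he1 he2.
  apply: (@same_of_meet x y z (xa x - e')).
  - lra.
  - lra.
  - have sy : sega y (xa x - e') = xa x - e' by apply: sega_id; lra.
    have sz : sega z (xa x - e') = xa x - e' by apply: sega_id; lra.
    apply: X_ext; first by rewrite !seg_xa sy sz.
    move=> s; rewrite !seg_xf /segf sy sz.
    case: ifP => // hs.
    case: (lerP s (xa x)) => hsx.
      rewrite hc1; last by apply/andP; split; lra.
      by rewrite hc2 ?e //; apply/andP; split; lra.
    clear e.
    by case: hy => _ hy'; case: hz => _ hz'; rewrite hy' ?hz'.
  - move=> t /andP[t1 t2] ex; have := seg_xa y t; rewrite ex sega_id //; lra.
  - move=> t /andP[t1 t2] ex; have := seg_xa z t; rewrite ex sega_id //; lra.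
- by rewrite (asboolT hy) (asboolF hz).
- by rewrite (asboolF hy) (asboolT hz).
rewrite (asboolF hy) (asboolF hz) => _.
have [by_ [hby1 hby2]] := xf_ev y.
have [bz [hbz1 hbz2]] := xf_ev z.
have hpy := xa_pos y; have hpz := xa_pos z.
apply: (@same_of_meet x y z (by_ + bz)).
- lra.
- lra.
- have sy : sega y (by_ + bz) = by_ + bz by apply: sega_id; lra.
  have sz : sega z (by_ + bz) = by_ + bz by apply: sega_id; lra.
  apply: X_ext; first by rewrite !seg_xa sy sz.
  move=> s; rewrite !seg_xf /segf sy sz.
  case: ifP => // hs; rewrite hby2 ?hbz2 //; lra.
- by move=> t _ ex; apply: hy; rewrite -ex; apply: preceq_seg.
- by move=> t _ ex; apply: hz; rewrite -ex; apply: preceq_seg.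
Qed.

Lemma lbl_of_same (x y z : XX) : same_component_minus x y z -> lblX x y = lblX x z.
Proof.
move=> [A [cA [avA [Ay Az]]]].
apply: contrapT => hne.
pose o := lblX x y.
have oU := @open_lbl x o.
have oV : rho_open (fun p => p <> x /\ lblX x p <> o).
  move=> p [hpx hpo].
  have [e [he hq]] := @open_lbl x (lblX x p) p (conj hpx erefl).
  by exists e; split => // q /hq [h1 h2]; split => //; rewrite h2.
have hcov : forall w, A w -> (w <> x /\ lblX x w = o) \/ (w <> x /\ lblX x w <> o).
  move=> w Aw; have := avA _ Aw => hw.
  by have [h|h] := pselect (lblX x w = o); [left|right].
have [p [Ap [[_ h1] [_ h2]]]] := cA _ _ oU oV hcov
   (ex_intro _ y (conj Ay (conj (avA _ Ay) erefl)))
   (ex_intro _ z (conj Az (conj (avA _ Az) (fun e => hne (esym e))))).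
by [].
Qed.

Lemma pt_none (x : XX) : exists y : XX, y <> x /\ lblX x y = None.
Proof.
have hx := xa_pos x.
have hwf : wf (Pt (xa x + 1) (fun _ => 0 : G)).
  split => /=; first by lra.
  split => //.
  split.
    move=> s hs; exists ((s - (xa x + 1)) / 2); split; first by lra.
    by split => //; lra.
  by exists (xa x + 1); split.
pose y : XX := exist _ _ hwf.
have hy : xa y = xa x + 1 by [].
exists y; split.
  by move=> e; move: hy; rewrite e; lra.
rewrite /lblX asboolF // => -[h _]; move: h; rewrite hy; lra.
Qed.

Lemma pt_some (x : XX) (g : G) : exists y : XX, y <> x /\ lblX x y = Some g.
Proof.
have hx := xa_pos x.
pose f := fun s => if xa x < s then xf x s else if xa x / 2 < s then g else 0.
have [bx [hbx1 hbx2]] := xf_ev x.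
have hwf : wf (Pt (xa x / 2) f).
  split => /=; first by lra.
  split.
    move=> t ht; rewrite /f.
    have -> : (xa x < t) = false by apply/negbTE; rewrite -leNgt; lra.
    by have -> : (xa x / 2 < t) = false by apply/negbTE; rewrite -leNgt.
  split.
    move=> s hs; case: (lerP s (xa x)) => hsx.
      exists ((s - xa x / 2) / 2); split; first by lra.
      split; first by lra.
      move=> t /andP[t1 t2]; rewrite /f.
      have -> : (xa x < t) = false by apply/negbTE; rewrite -leNgt; lra.
      have -> : (xa x < s) = false by apply/negbTE; rewrite -leNgt.
      have -> : (xa x / 2 < t) by lra.
      by rewrite hs.
    have [eps [he [he2 hc]]] := xf_pw hsx.
    have hd : 0 < (s - xa x) / 2 by lra.
    have [e' [he' [h1 h2]]] := min_pos he hd.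
    exists e'; split => //; split; first by lra.
    move=> t /andP[t1 t2]; rewrite /f.
    have -> : xa x < t by lra.
    rewrite hsx; apply: hc; apply/andP; split; lra.
  exists bx; split; first by lra.
  move=> t ht; rewrite /f; have -> : xa x < t by lra.
  exact: hbx2.
pose y : XX := exist _ _ hwf.
have hy : xa y = xa x / 2 by [].
have hyx : preceq y x.
  split; first by rewrite hy; lra.
  by move=> t ht; rewrite /xf /= /f ht.
exists y; split.
  by move=> e; move: hy; rewrite e; lra.
rewrite /lblX asboolT //; congr Some.
rewrite /xf /= /f ltxx.
by have -> : xa x / 2 < xa x by lra.
Qed.

End Proof.

Theorem lemma6 (R : realType) (G : zmodType) (x : X R G) :
  exists lbl : {y : X R G | y <> x} -> option G,
    (forall o : option G, exists y, lbl y = o) /\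
    (forall y z : {y : X R G | y <> x},
        lbl y = lbl z <-> same_component_minus x (proj1_sig y) (proj1_sig z)).
Proof.
exists (fun y => lblX x (proj1_sig y)); split.
  case => [g|].
    have [y [hy e]] := pt_some x g; by exists (exist _ y hy).
  have [y [hy e]] := pt_none x; by exists (exist _ y hy).
move=> [y hy] [z hz] /=; split.
  exact: same_of_lbl.
exact: lbl_of_same.
Qed.
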